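(* Let $X=\{a_1,\dots,a_\ell\}$ be a finite set of $\ell$ distinct points and $N\ge 2$. A probability measure $\mu$ on $X^2$ is an extreme point of the convex set $\mathcal{P}_{N\text{-}rep}(X^2)$ of $N$-representable two-point probability measures if and only if it is of the form $$\mu=\lambda\otimes\lambda+\frac1{N-1}\Big(\lambda\otimes\lambda-\sum_{i=1}^\ell\lambda_i\,\delta_i\otimes\delta_i\Big)$$ for some $\lambda\in\mathcal{P}_{\frac1N}(X)$.
   Context: $\mathcal{P}(X)$ denotes the probability measures on $X$, identified with vectors $(\lambda_1,\dots,\lambda_\ell)$ where $\lambda_i=\lambda(\{a_i\})$; $\delta_i$ is the Dirac measure at $a_i$. $\mathcal{P}_{\frac1N}(X)=\{\lambda\in\mathcal{P}(X):\lambda_i\in\frac1N\mathbb{Z}\ \forall i\}$. A probability measure $\gamma$ on $X^N$ is symmetric if $\gamma(A_1\times\cdots\times A_N)=\gamma(A_{\sigma(1)}\times\cdots\times A_{\sigma(N)})$ for all $A_i\subseteq X$ and permutations $\sigma$. A probability measure $\mu$ on $X^2$ is $N$-representable if there is a symmetric probability measure $\gamma$ on $X^N$ with two-point marginal $\gamma(A\times X^{N-2})=\mu(A)$ for all $A\subseteq X^2$; $\mathcal{P}_{N\text{-}rep}(X^2)$ denotes the set of such $\mu$. *)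

(* Defs.v *)
From HB Require Import structures.
From mathcomp Require Import all_boot all_order all_algebra.
From mathcomp Require Import fingroup perm.
From mathcomp Require Import reals.
Set Implicit Arguments. Unset Strict Implicit. Unset Printing Implicit Defensive.
Import Order.TTheory GRing.Theory Num.Theory.
Local Open Scope ring_scope.

Section Defs.
Variable R : realType.

Definition is_prob (U : finType) (m : U -> R) : Prop :=
  (forall u, 0 <= m u) /\ \sum_(u : U) m u = 1.

Definition massof (U : finType) (m : U -> R) (A : {set U}) : R :=
  \sum_(u in A) m u.

Definition rect (T : finType) (N : nat) (A : 'I_N -> {set T})
  : {set {ffun 'I_N -> T}} :=
  [set x : {ffun 'I_N -> T} | [forall i, x i \in A i]].

Definition symmetric (T : finType) (N : nat) (g : {ffun 'I_N -> T} -> R) : Prop :=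
  forall (A : 'I_N -> {set T}) (s : {perm 'I_N}),
    massof g (rect A) = massof g (rect (fun i => A (s i))).

(* A x X^{N-2}, i.e. the set of x whose first two coordinates lie in A *)
Definition cyl2 (T : finType) (N : nat) (A : {set T * T})
  : {set {ffun 'I_N -> T}} :=
  [set x : {ffun 'I_N -> T} | [exists i0 : 'I_N, exists i1 : 'I_N,
     [&& val i0 == 0%N, val i1 == 1%N & (x i0, x i1) \in A]]].

Definition N_representable (T : finType) (N : nat) (mu : T * T -> R) : Prop :=
  exists g : {ffun 'I_N -> T} -> R,
    is_prob g /\ symmetric g /\
    forall A : {set T * T}, massof g (@cyl2 T N A) = massof mu A.

Definition prob_grid (T : finType) (N : nat) (lam : T -> R) : Prop :=
  is_prob lam /\ forall a, exists k : int, lam a = k%:~R / N%:R.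

Definition extreme_point (U : finType) (S : (U -> R) -> Prop) (mu : U -> R) : Prop :=
  S mu /\
  forall (nu1 nu2 : U -> R) (t : R), S nu1 -> S nu2 -> 0 < t < 1 ->
    (forall u, mu u = t * nu1 u + (1 - t) * nu2 u) -> forall u, nu1 u = nu2 u.

End Defs.

(* Main.v *)
Require Import Defs.
From HB Require Import structures.
From mathcomp Require Import all_boot all_order all_algebra.
From mathcomp Require Import fingroup perm.
From mathcomp Require Import reals.
From mathcomp Require Import ring lra.
Import Order.TTheory GRing.Theory Num.Theory.
Set Implicit Arguments. Unset Strict Implicit. Unset Printing Implicit Defensive.
Local Open Scope ring_scope.


Definition permf (T : finType) (N : nat) (s : {perm 'I_N}) (y : {ffun 'I_N -> T})
  : {ffun 'I_N -> T} := [ffun i => y (s i)].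

Definition sym_pt (R : realType) (T : finType) (N : nat) (g : {ffun 'I_N -> T} -> R) :=
  forall s y, g (permf s y) = g y.

Lemma permf_inj (T : finType) (N : nat) (s : {perm 'I_N}) : injective (@permf T N s).
Proof.
move=> y z /ffunP H; apply/ffunP => k.
have := H (s^-1 k)%g; rewrite !ffunE permKV; done.
Qed.

Lemma sym_to_pt (R : realType) (T : finType) (N : nat) (g : {ffun 'I_N -> T} -> R) :
  Defs.symmetric g -> sym_pt g.
Proof.
move=> H s y.
have := H (fun i => [set y i]) s.
have E1 : rect (fun i => [set y i]) = [set y].
  apply/setP => z; rewrite !inE; apply/forallP/eqP => [Hz|->]; last by move=> i; rewrite inE.
  by apply/ffunP => i; have := Hz i; rewrite inE => /eqP.
have E2 : rect (fun i => [set y (s i)]) = [set permf s y].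
  apply/setP => z; rewrite !inE; apply/forallP/eqP => [Hz|->]; last by move=> i; rewrite inE ffunE.
  by apply/ffunP => i; have := Hz i; rewrite inE ffunE => /eqP.
rewrite E1 E2 /massof !big_set1 => ->; done.
Qed.

Lemma pt_to_sym (R : realType) (T : finType) (N : nat) (g : {ffun 'I_N -> T} -> R) :
  sym_pt g -> Defs.symmetric g.
Proof.
move=> H A s; rewrite /massof.
rewrite (reindex_inj (@permf_inj T N (s^-1)%g)) /=.
apply: eq_big => [w|w _]; last by rewrite H.
rewrite !inE; apply/forallP/forallP => Hw i.
  by have := Hw (s i); rewrite ffunE permK.
by rewrite ffunE; have := Hw ((s^-1)%g i); rewrite permKV.
Qed.



Definition cnt (T : finType) (N : nat) (y : {ffun 'I_N -> T}) : {ffun T -> nat} :=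
  [ffun a => (\sum_(i < N) (y i == a))%N].

Definition lamx (R : realType) (T : finType) (N : nat) (y : {ffun 'I_N -> T}) : T -> R :=
  fun a => (cnt y a)%:R / N%:R.

Arguments lamx {R T N} y _.

Definition mf (R : realType) (T : finType) (N : nat) (lam : T -> R) (a b : T) : R :=
  lam a * lam b + (N%:R - 1)^-1 * (lam a * lam b - (a == b)%:R * lam a).

Definition Pij (R : realType) (T : finType) (N : nat) (g : {ffun 'I_N -> T} -> R)
  (i j : 'I_N) (a b : T) : R :=
  \sum_x g x * ((x i == a) && (x j == b))%:R.

Lemma sum_delta (R : realType) (I : finType) (i : I) (F : I -> R) :
  \sum_j (i == j)%:R * F j = F i.
Proof.
rewrite (bigD1 i) //= eqxx mul1r big1 ?addr0 // => j /negbTE.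
by rewrite eq_sym => ->; rewrite mul0r.
Qed.

Lemma cntE (R : realType) (T : finType) (N : nat) (y : {ffun 'I_N -> T}) a :
  ((cnt y a)%:R : R) = \sum_i (y i == a)%:R.
Proof. by rewrite ffunE natr_sum. Qed.

Lemma Pij_perm (R : realType) (T : finType) (N : nat) (g : {ffun 'I_N -> T} -> R)
  (s : {perm 'I_N}) i j a b :
  sym_pt g -> Pij g i j a b = Pij g (s i) (s j) a b.
Proof.
move=> H; rewrite /Pij (reindex_inj (@permf_inj T N s)) /=.
by apply: eq_bigr => x _; rewrite H !ffunE.
Qed.

Lemma Pij_const (R : realType) (T : finType) (N : nat) (g : {ffun 'I_N -> T} -> R)
  i j i0 i1 a b :
  sym_pt g -> i != j -> i0 != i1 -> Pij g i j a b = Pij g i0 i1 a b.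
Proof.
move=> H ij i01.
pose u := tperm i i0.
pose j' := u j.
pose v := tperm j' i1.
have ui : u i = i0 by rewrite /u tpermL.
have j'0 : j' != i0.
  by rewrite -ui /j' (inj_eq (@perm_inj _ u)) eq_sym.
rewrite (Pij_perm (u * v)%g i j a b H) !permM -/j' ui /v tpermL.
by rewrite tpermD // eq_sym.
Qed.

Lemma Cx (R : realType) (T : finType) (N : nat) (x : {ffun 'I_N -> T}) a b :
  \sum_i \sum_j (((i != j) && ((x i == a) && (x j == b)))%:R : R) =
  (cnt x a)%:R * (cnt x b)%:R - (a == b)%:R * (cnt x a)%:R.
Proof.
have E i j : (((i != j) && ((x i == a) && (x j == b)))%:R : R) =
   (x i == a)%:R * (x j == b)%:R - (i == j)%:R * ((x i == a)%:R * (x j == b)%:R).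
  by case: (i == j); case: (x i == a); case: (x j == b); rewrite /= ?mulr0 ?mul0r ?mulr1 ?mul1r ?subr0 ?subrr.
under eq_bigr do under eq_bigr do rewrite E.
under eq_bigr do rewrite sumrB sum_delta.
rewrite sumrB !cntE mulr_suml; congr (_ - _).
  by apply: eq_bigr => i _; rewrite mulr_sumr.
rewrite mulr_sumr; apply: eq_bigr => i _.
case: (x i =P a) => [->|_]; by rewrite ?mul1r ?mulr1 ?mul0r ?mulr0.
Qed.

Lemma Nfacts (R : realType) (N : nat) : (2 <= N)%N ->
  (N%:R : R) != 0 /\ (N%:R : R) - 1 != 0 /\ (0 : R) < N%:R /\ (1 : R) < N%:R.
Proof.
move=> hN; have h2 : (2 : R) <= N%:R by rewrite (ler_nat R 2 N).
split; first by apply/eqP => h; rewrite h in h2; lra.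
split; first by apply/eqP => h; lra.
split; lra.
Qed.

Lemma mf_scale (R : realType) (T : finType) (N : nat) (hN : (2 <= N)%N)
   (x : {ffun 'I_N -> T}) a b :
  mf N (lamx x) a b * (N%:R * (N%:R - 1)) =
  \sum_i \sum_j (((i != j) && ((x i == a) && (x j == b)))%:R : R).
Proof.
rewrite Cx /mf /lamx; have [h1 [h2 _]] := Nfacts R hN.
by field; rewrite h1 h2.
Qed.

Lemma sum_ind (R : realType) (I : finType) (i : I) :
  \sum_j ((i == j)%:R : R) = 1.
Proof. by rewrite (bigD1 i) //= eqxx big1 ?addr0 // => j; rewrite eq_sym => /negbTE ->. Qed.

Lemma sum_nind (R : realType) (N : nat) (i : 'I_N) :
  \sum_j ((i != j)%:R : R) = N%:R - 1.
Proof.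
transitivity (\sum_j (1 - ((i == j)%:R : R))).
  by apply: eq_bigr => j _; case: (i == j); rewrite /= ?subr0 ?subrr.
by rewrite sumrB sum_ind sumr_const card_ord.
Qed.

Lemma key (R : realType) (T : finType) (N : nat) (hN : (2 <= N)%N)
  (g : {ffun 'I_N -> T} -> R) (i0 i1 : 'I_N) a b :
  i0 != i1 -> sym_pt g ->
  Pij g i0 i1 a b = \sum_x g x * mf N (lamx x) a b.
Proof.
move=> i01 H.
have [h1 [h2 _]] := Nfacts R hN.
have NN : (N%:R * (N%:R - 1) : R) != 0 by rewrite mulf_neq0.
apply: (mulIf NN).
rewrite [RHS]mulr_suml.
under [RHS]eq_bigr do rewrite -mulrA mf_scale // mulr_sumr.
rewrite exchange_big /=.
under [RHS]eq_bigr do [under eq_bigr do rewrite mulr_sumr; rewrite exchange_big /=].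
transitivity (\sum_(i < N) \sum_(j < N) (i != j)%:R * Pij g i0 i1 a b).
  under [RHS]eq_bigr do rewrite -mulr_suml sum_nind.
  by rewrite -mulr_suml sumr_const card_ord -mulr_natl; ring.
apply: eq_bigr => i _; apply: eq_bigr => j _.
case: (eqVneq i j) => [->|ij] /=.
  by rewrite mul0r big1 // => x _; rewrite mulr0.
rewrite mul1r -(Pij_const a b H ij i01).
by apply: eq_bigr => x _.
Qed.



Definition mix (R : realType) (T : finType) (N : nat) (g : {ffun 'I_N -> T} -> R)
  (p : T * T) : R := \sum_y g y * mf N (lamx y) p.1 p.2.

Lemma cyl2_in (T : finType) (N : nat) (hN : (2 <= N)%N) (A : {set T * T}) x :
  (x \in @cyl2 T N A) = ((x (Ordinal (ltnW hN)), x (Ordinal hN)) \in A).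
Proof.
rewrite inE; apply/existsP/idP => [[j0 /existsP [j1 /and3P [/eqP h0 /eqP h1 hA]]] | hA].
  have -> : Ordinal (ltnW hN) = j0 by apply: val_inj.
  by have -> : Ordinal hN = j1 by apply: val_inj.
by exists (Ordinal (ltnW hN)); apply/existsP; exists (Ordinal hN); rewrite /= hA.
Qed.

Lemma ind_sum (R : realType) (U : finType) (A : {set U}) q :
  ((q \in A)%:R : R) = \sum_(p in A) (q == p)%:R.
Proof.
have := sum_delta q (fun p => ((p \in A)%:R : R)); rewrite /= => <-.
rewrite [RHS]big_mkcond; apply: eq_bigr => p _.
by case: (p \in A); rewrite ?mulr1 ?mulr0.
Qed.

Lemma cyl2_mass (R : realType) (T : finType) (N : nat) (hN : (2 <= N)%N)
  (g : {ffun 'I_N -> T} -> R) (A : {set T * T}) :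
  sym_pt g -> massof g (@cyl2 T N A) = massof (mix g) A.
Proof.
move=> H.
rewrite /massof big_mkcond.
transitivity (\sum_x \sum_(p in A) g x * ((x (Ordinal (ltnW hN)), x (Ordinal hN)) == p)%:R).
  apply: eq_bigr => x _; rewrite -mulr_sumr -ind_sum cyl2_in.
  by case: (_ \in A); rewrite ?mulr1 ?mulr0.
rewrite exchange_big /=; apply: eq_bigr => [[a b]] _.
have i01 : Ordinal (ltnW hN) != Ordinal hN by [].
rewrite /mix /= -(key hN a b i01 H) /Pij.
by apply: eq_bigr => x _; rewrite xpair_eqE.
Qed.

Lemma rep_mix (R : realType) (T : finType) (N : nat) (hN : (2 <= N)%N)
  (g : {ffun 'I_N -> T} -> R) :
  is_prob g -> sym_pt g -> N_representable N (mix g).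
Proof.
move=> Hp Hs; exists g; split => //; split; first exact: pt_to_sym.
by move=> A; apply: cyl2_mass.
Qed.

Lemma dec (R : realType) (T : finType) (N : nat) (hN : (2 <= N)%N) (nu : T * T -> R) :
  N_representable N nu ->
  exists g : {ffun 'I_N -> T} -> R, [/\ is_prob g, sym_pt g & forall p, nu p = mix g p].
Proof.
move=> [g [Hp [Hs HA]]]; have Hs' := sym_to_pt Hs.
exists g; split => // p.
have := HA [set p]; rewrite cyl2_mass // /massof !big_set1 => ->; done.
Qed.

Lemma rep_ext (R : realType) (T : finType) (N : nat) (f f' : T * T -> R) :
  (forall p, f p = f' p) -> N_representable N f -> N_representable N f'.
Proof.
move=> E [g [Hp [Hs HA]]]; exists g; split => //; split => // A.
by rewrite HA /massof; apply: eq_bigr => p _.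
Qed.



Lemma sum_cnt (T : finType) (N : nat) (x : {ffun 'I_N -> T}) :
  (\sum_a cnt x a)%N = N.
Proof.
under eq_bigr do rewrite ffunE.
rewrite exchange_big /=.
rewrite -[RHS]card_ord -sum1_card; apply: eq_bigr => i _.
rewrite (bigD1 (x i)) //= eqxx big1 // => a; rewrite eq_sym => /negbTE ->; done.
Qed.

Lemma config (R : realType) (T : finType) (N : nat) (hN : (2 <= N)%N) (lam : T -> R) :
  prob_grid N lam -> exists x : {ffun 'I_N -> T}, forall a, lamx x a = lam a.
Proof.
move=> [[H0 H1] Hg].
have [hN0 [_ [hNp _]]] := Nfacts R hN.
have : forall a, exists n : nat, lam a = n%:R / N%:R.
  move=> a; have [k hk] := Hg a.
  have hk0 : 0 <= k.
    have := H0 a; rewrite hk pmulr_lge0 ?invr_gt0 //.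
    by rewrite ler0z.
  by exists `|k|%N; rewrite hk -{1}(gez0_abs hk0).
move=> /fin_all_exists [n Hn].
have Sn : (\sum_a n a)%N = N.
  apply/eqP; rewrite -(eqr_nat R) natr_sum; apply/eqP.
  apply: (mulIf (invr_neq0 hN0)); rewrite divff // mulr_suml -[RHS]H1.
  by apply: eq_bigr => a _; rewrite Hn.
pose s := flatten [seq nseq (n a) a | a <- enum T].
have ss : size s = N.
  rewrite size_flatten /shape -map_comp sumnE big_map -[RHS]Sn big_enum /=.
  by apply: eq_bigr => a _; rewrite /= size_nseq.
have cs : forall a, count_mem a s = n a.
  move=> a; rewrite count_flatten -map_comp sumnE big_map big_enum /=.
  rewrite (bigD1 a) //= count_nseq /= eqxx mul1n big1 ?addn0 // => b hb.
  by rewrite count_nseq /= (negbTE hb).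
case Es : s ss cs => [|a0 s'] ss cs; first by move: hN; rewrite -ss.
rewrite -Es in ss cs.
exists [ffun i : 'I_N => nth a0 s i] => a.
rewrite /lamx Hn; congr (_ / _); congr (_%:R).
rewrite ffunE -cs -sum1_count (big_nth a0) big_mkord -ss [RHS]big_mkcond /=.
by apply: eq_bigr => i _; rewrite ffunE; case: (_ == a).
Qed.

Lemma permf_cnt (T : finType) (N : nat) (s : {perm 'I_N}) (y : {ffun 'I_N -> T}) :
  cnt (permf s y) = cnt y.
Proof.
apply/ffunP => a; rewrite !ffunE [RHS](reindex_inj (@perm_inj _ s)) /=.
by apply: eq_bigr => i _; rewrite ffunE.
Qed.

Lemma lamx_grid (R : realType) (T : finType) (N : nat) (hN : (2 <= N)%N)
  (x : {ffun 'I_N -> T}) : prob_grid N (@lamx R T N x).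
Proof.
have [hN0 [_ [hNp _]]] := Nfacts R hN.
split; last by move=> a; exists (cnt x a)%:Z.
split; first by move=> a; rewrite /lamx divr_ge0.
rewrite /lamx -mulr_suml -natr_sum sum_cnt divff //.
Qed.

Lemma mix_class (R : realType) (T : finType) (N : nat) (w : {ffun 'I_N -> T} -> R)
  (x : {ffun 'I_N -> T}) p :
  (forall y, w y != 0 -> cnt y = cnt x) ->
  mix w p = (\sum_y w y) * mf N (lamx x) p.1 p.2.
Proof.
move=> H; rewrite /mix mulr_suml; apply: eq_bigr => y _.
case: (eqVneq (w y) 0) => [->|hy]; first by rewrite !mul0r.
by rewrite /lamx (H y hy).
Qed.

Lemma restrict_ok (R : realType) (T : finType) (N : nat) (g : {ffun 'I_N -> T} -> R)
  (P : pred {ffun 'I_N -> T}) :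
  (forall y, 0 <= g y) -> sym_pt g -> (forall s y, P (permf s y) = P y) ->
  0 < \sum_y g y * (P y)%:R ->
  is_prob (fun y => g y * (P y)%:R / \sum_y g y * (P y)%:R) /\
  sym_pt (fun y => g y * (P y)%:R / \sum_y g y * (P y)%:R).
Proof.
move=> g0 gs Ps c0; split; last by move=> s y; rewrite gs Ps.
split; first by move=> y; rewrite divr_ge0 ?ler0n ?mulr_ge0 // ltW.
by rewrite -mulr_suml divff // gt_eqF.
Qed.



Definition Lf (R : realType) (T : finType) (N : nat) (l0 : T -> R) (nu : T * T -> R) : R :=
  \sum_a \sum_b ((a == b)%:R * ((N%:R - 1) / N%:R) - 2 * l0 a) * nu (a, b).

Lemma sum_mf (R : realType) (T : finType) (N : nat) (lam : T -> R) a :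
  \sum_b lam b = 1 -> \sum_b mf N lam a b = lam a.
Proof.
move=> H1.
have E b : mf N lam a b = (lam a * (1 + (N%:R - 1)^-1)) * lam b
    - (N%:R - 1)^-1 * ((a == b)%:R * lam a) by rewrite /mf; ring.
rewrite (eq_bigr _ (fun b _ => E b)) sumrB -mulr_sumr -mulr_sumr H1.
have := sum_delta a (fun _ => lam a); rewrite /= => ->.
ring.
Qed.

Lemma Lmf (R : realType) (T : finType) (N : nat) (hN : (2 <= N)%N) (lam l0 : T -> R) :
  \sum_b lam b = 1 ->
  Lf N l0 (fun p => mf N lam p.1 p.2) + (\sum_a l0 a ^+ 2 + N%:R^-1)
  = \sum_a (lam a - l0 a) ^+ 2.
Proof.
move=> H1; have [h0 [h1 _]] := Nfacts R hN.
have E a : \sum_b ((a == b)%:R * ((N%:R - 1) / N%:R) - 2 * l0 a) * mf N lam a b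
   = lam a ^+ 2 - lam a / N%:R - 2 * l0 a * lam a.
  have E2 b : ((a == b)%:R * ((N%:R - 1) / N%:R) - 2 * l0 a) * mf N lam a b =
     (a == b)%:R * (((N%:R - 1) / N%:R) * mf N lam a b) - 2 * l0 a * mf N lam a b by ring.
  rewrite (eq_bigr _ (fun b _ => E2 b)) sumrB -mulr_sumr sum_mf //.
  have := sum_delta a (fun b => ((N%:R - 1) / N%:R) * mf N lam a b); rewrite /= => ->.
  rewrite /mf eqxx (_ : true%:R = 1) //; field; by rewrite h0 h1.
rewrite /Lf /= (eq_bigr _ (fun a _ => E a)).
have E3 a : (lam a - l0 a) ^+ 2 = (lam a ^+ 2 - lam a / N%:R - 2 * l0 a * lam a)
   + l0 a ^+ 2 + lam a / N%:R by ring.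
rewrite (eq_bigr _ (fun a _ => E3 a)) !big_split /= -mulr_suml H1 mul1r.
ring.
Qed.

Lemma Lmix (R : realType) (T : finType) (N : nat) (l0 : T -> R)
  (g : {ffun 'I_N -> T} -> R) :
  Lf N l0 (mix g) = \sum_y g y * Lf N l0 (fun p => mf N (lamx y) p.1 p.2).
Proof.
rewrite /Lf /mix /=.
under eq_bigr do under eq_bigr do rewrite mulr_sumr.
under eq_bigr do rewrite exchange_big /=.
rewrite exchange_big /=; apply: eq_bigr => y _.
rewrite mulr_sumr; apply: eq_bigr => a _.
rewrite mulr_sumr; apply: eq_bigr => b _.
by rewrite mulrCA.
Qed.

Lemma Llin (R : realType) (T : finType) (N : nat) (l0 : T -> R) (n1 n2 : T * T -> R) t :
  Lf N l0 (fun u => t * n1 u + (1 - t) * n2 u) = t * Lf N l0 n1 + (1 - t) * Lf N l0 n2.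
Proof.
rewrite /Lf !mulr_sumr -big_split; apply: eq_bigr => a _.
rewrite !mulr_sumr -big_split; apply: eq_bigr => b _ /=.
ring.
Qed.

Lemma mix_scale (R : realType) (T : finType) (N : nat) (w : {ffun 'I_N -> T} -> R) c p :
  mix (fun y => w y / c) p = mix w p / c.
Proof.
rewrite /mix mulr_suml; apply: eq_bigr => y _; ring.
Qed.

Lemma mix_add (R : realType) (T : finType) (N : nat) (g : {ffun 'I_N -> T} -> R)
  (P : pred {ffun 'I_N -> T}) p :
  mix g p = mix (fun y => g y * (P y)%:R) p + mix (fun y => g y * (~~ P y)%:R) p.
Proof.
rewrite /mix -big_split; apply: eq_bigr => y _ /=.
by case: (P y); rewrite /= ?mulr1 ?mulr0 ?mul0r ?addr0 ?add0r.
Qed.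


Unset Implicit Arguments.


Theorem theorem2p2 (R : realType) (T : finType) (N : nat) (hN : (2 <= N)%N)
  (mu : T * T -> R) (hmu : is_prob mu) :
  extreme_point (@N_representable R T N) mu <->
  exists lam : T -> R, prob_grid N lam /\
    forall a b : T,
      mu (a, b) = lam a * lam b
                  + (N%:R - 1)^-1 * (lam a * lam b - (a == b)%:R * lam a).
Proof.
have [hN0 [hN1 [hNp hN1p]]] := Nfacts R hN.
split.
- move=> [Smu Hext].
  have [g [[g0 g1] gs gmix]] := dec hN Smu.
  have [x gx] : exists x, 0 < g x.
    case: (pickP (fun x => 0 < g x)) => [x gx|H]; first by exists x.
    exfalso; move: g1; rewrite big1 => [|y _].
      by move/eqP; rewrite eq_sym oner_eq0.
    by apply/eqP; rewrite eq_le g0 andbT leNgt H.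
  exists (lamx x); split; first exact: lamx_grid.
  suff H : forall p, mu p = mf N (lamx x) p.1 p.2 by move=> a b; exact: (H (a, b)).
  pose P := fun y : {ffun 'I_N -> T} => cnt y == cnt x.
  pose Q := fun y : {ffun 'I_N -> T} => ~~ P y.
  pose t := \sum_y g y * (P y)%:R.
  pose u := \sum_y g y * (Q y)%:R.
  have Pinv s y : P (permf s y) = P y by rewrite /P permf_cnt.
  have Qinv s y : Q (permf s y) = Q y by rewrite /Q Pinv.
  have tu : t + u = 1.
    rewrite -g1 /t /u -big_split; apply: eq_bigr => y _ /=.
    by rewrite /Q; case: (P y); rewrite /= ?mulr1 ?mulr0 ?addr0 ?add0r.
  have u0 : 0 <= u by apply: sumr_ge0 => y _; rewrite mulr_ge0.
  have t0 : 0 < t.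
    rewrite /t (bigD1 x) //= /P eqxx mulr1.
    have : 0 <= \sum_(y | y != x) g y * (cnt y == cnt x)%:R.
      by apply: sumr_ge0 => y _; rewrite mulr_ge0.
    lra.
  have mixP p : mix (fun y => g y * (P y)%:R) p = t * mf N (lamx x) p.1 p.2.
    apply: mix_class => y; case: (eqVneq (cnt y) (cnt x)) => // ne.
    by rewrite /P (negbTE ne) mulr0 eqxx.
  have [t1|t1] := ltP t 1.
  + have u0' : 0 < u by lra.
    have [p1 s1] := restrict_ok g0 gs Pinv t0.
    have [p2 s2] := restrict_ok g0 gs Qinv u0'.
    have S1 := rep_mix hN p1 s1.
    have S2 := rep_mix hN p2 s2.
    have E1 p : mix (fun y => g y * (P y)%:R / t) p = mf N (lamx x) p.1 p.2.
      by rewrite mix_scale mixP mulrC mulrA mulVf ?mul1r // gt_eqF.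
    have Hm : forall w, mu w = t * mix (fun y => g y * (P y)%:R / t) w
                     + (1 - t) * mix (fun y => g y * (Q y)%:R / u) w.
      move=> w; rewrite gmix (mix_add g P) !mix_scale.
      have -> : 1 - t = u by lra.
      by rewrite [t * _]mulrC [u * _]mulrC !divfK ?gt_eqF.
    have t01 : 0 < t < 1 by rewrite t0 t1.
    have Heq := Hext _ _ t S1 S2 t01 Hm.
    move=> p; rewrite Hm -Heq E1; ring.
  + have t_1 : t = 1 by apply/eqP; rewrite eq_le t1 -tu lerDl u0.
    have u_0 : u = 0 by lra.
    have Z y : g y * (Q y)%:R = 0.
      by apply: (psumr_eq0P _ u_0) => // z _; rewrite mulr_ge0.
    move=> p; rewrite gmix (mix_add g P) mixP t_1 mul1r /mix big1 ?addr0 // => y _.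
    by rewrite Z mul0r.
- move=> [lam [Hg Hmu]].
  have [x Hx] := config hN Hg.
  have mux p : mu p = mf N (lamx x) p.1 p.2 by case: p => a b; rewrite Hmu /mf !Hx.
  pose P := fun y : {ffun 'I_N -> T} => cnt y == cnt x.
  have Pinv s y : P (permf s y) = P y by rewrite /P permf_cnt.
  pose g1 := fun _ : {ffun 'I_N -> T} => (1 : R).
  have K0 : 0 < \sum_y g1 y * (P y)%:R.
    rewrite (bigD1 x) //= /P /g1 eqxx mulr1.
    have : 0 <= \sum_(y | y != x) (1 : R) * (cnt y == cnt x)%:R.
      by apply: sumr_ge0 => y _; rewrite mulr_ge0.
    lra.
  have g10 : forall y, 0 <= g1 y by move=> y; rewrite /g1 ler01.
  have g1s : sym_pt g1 by [].
  have [p0 s0] := restrict_ok g10 g1s Pinv K0.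
  have cls : forall w : {ffun 'I_N -> T} -> R, (forall y, ~~ P y -> w y = 0) ->
      forall y, w y != 0 -> cnt y = cnt x.
    move=> w Hw y; case: (eqVneq (cnt y) (cnt x)) => // ne.
    by have := Hw y; rewrite /P ne => /(_ isT) ->; rewrite eqxx.
  have Smu : N_representable N mu.
    apply: (rep_ext _ (rep_mix hN p0 s0)) => p.
    rewrite (mix_class (x:=x)); last first.
      by apply: cls => y /negbTE ->; rewrite mulr0 mul0r.
    by case: p0 => _ /= ->; rewrite mul1r mux.
  split => // nu1 nu2 t S1 S2 /andP [t0 t1] Hmix w.
  have [ga [[ga0 ga1] gas gam]] := dec hN S1.
  have [gb [[gb0 gb1] gbs gbm]] := dec hN S2.
  pose l0 := @lamx R T N x.
  pose c := \sum_a l0 a ^+ 2 + N%:R^-1.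
  pose D := fun y : {ffun 'I_N -> T} => \sum_a (@lamx R T N y a - l0 a) ^+ 2.
  have D0 y : 0 <= D y by apply: sumr_ge0 => a _; rewrite sqr_ge0.
  have sl y : \sum_b @lamx R T N y b = 1 by have [[_ ->] _] := lamx_grid R hN y.
  have LE (g : {ffun 'I_N -> T} -> R) : \sum_y g y = 1 ->
      Lf N l0 (mix g) + c = \sum_y g y * D y.
    move=> gsum.
    transitivity (\sum_y g y * (Lf N l0 (fun p => mf N (lamx y) p.1 p.2) + c)).
      by rewrite Lmix; under [RHS]eq_bigr do rewrite mulrDr; rewrite big_split /= -mulr_suml gsum mul1r.
    by apply: eq_bigr => y _; rewrite Lmf.
  have Lmu : Lf N l0 mu + c = 0.
    transitivity (Lf N l0 (fun p => mf N l0 p.1 p.2) + c).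
      by congr (_ + _); apply: eq_bigr => a _; apply: eq_bigr => b _; rewrite mux.
    by rewrite Lmf ?sl // big1 // => a _; rewrite subrr expr2 mulr0.
  have Lm : Lf N l0 mu = t * Lf N l0 nu1 + (1 - t) * Lf N l0 nu2.
    rewrite -Llin; apply: eq_bigr => a0 _; apply: eq_bigr => b0 _; by rewrite Hmix.
  have L1 : Lf N l0 nu1 = Lf N l0 (mix ga).
    by apply: eq_bigr => a1 _; apply: eq_bigr => b1 _; rewrite gam.
  have L2 : Lf N l0 nu2 = Lf N l0 (mix gb).
    by apply: eq_bigr => a1 _; apply: eq_bigr => b1 _; rewrite gbm.
  have E1 := LE ga ga1.
  have E2 := LE gb gb1.
  have F1 : 0 <= \sum_y ga y * D y by apply: sumr_ge0 => y _; rewrite mulr_ge0.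
  have F2 : 0 <= \sum_y gb y * D y by apply: sumr_ge0 => y _; rewrite mulr_ge0.
  have tF1 : 0 <= t * \sum_y ga y * D y by rewrite mulr_ge0 // ltW.
  have tF2 : 0 <= (1 - t) * \sum_y gb y * D y by rewrite mulr_ge0 // subr_ge0 ltW.
  have Z : t * (\sum_y ga y * D y) + (1 - t) * (\sum_y gb y * D y) = 0.
    rewrite -E1 -E2 -L1 -L2; move: Lmu; rewrite Lm; lra.
  have Z1 : \sum_y ga y * D y = 0.
    have : t * \sum_y ga y * D y = 0 by lra.
    by move/eqP; rewrite mulf_eq0 gt_eqF //= => /eqP.
  have Z2 : \sum_y gb y * D y = 0.
    have : (1 - t) * \sum_y gb y * D y = 0 by lra.
    by move/eqP; rewrite mulf_eq0 subr_eq0 eq_sym lt_eqF //= => /eqP.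
  have cl (g : {ffun 'I_N -> T} -> R) : (forall y, 0 <= g y) -> \sum_y g y * D y = 0 ->
      forall y, g y != 0 -> cnt y = cnt x.
    move=> g0 Hs y gy.
    have := psumr_eq0P (fun y _ => mulr_ge0 (g0 y) (D0 y)) Hs (i := y) isT.
    move/eqP; rewrite mulf_eq0 (negbTE gy) /= => /eqP Dy.
    apply/ffunP => a.
    have := psumr_eq0P (fun a _ => sqr_ge0 (@lamx R T N y a - l0 a)) Dy (i := a) isT.
    move/eqP; rewrite sqrf_eq0 subr_eq0 /l0 /lamx => /eqP.
    move/(mulIf (invr_neq0 hN0))/eqP; rewrite eqr_nat => /eqP; done.
  rewrite gam gbm (mix_class (x:=x) _ (cl ga ga0 Z1)) (mix_class (x:=x) _ (cl gb gb0 Z2)).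
  by rewrite ga1 gb1.
Qed.
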